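(* Let $(X,\mathcal{B},\mu)$ be a measure space, $\varphi:X\to X$ a measurable map, $I$ a countable set and $\{B_i\}_{i\in I}$ a family of measurable sets of positive measure. Then the following are equivalent: (i) there exists $A\subseteq\mathbb{N}$ with $\overline{\mathrm{dens}}(A)=1$ such that $\lim_{n\in A}\mu(\varphi^{-n}(B_i))=0$ for all $i\in I$; (ii) there exists an increasing sequence $(M_j)$ in $\mathbb{N}$ such that for every $k\in\mathbb{N}$ and $i\in I$ there is $n_{k,i}\in\mathbb{N}$ with \[\operatorname{card}\{1\le n\le M_j:\ \mu(\varphi^{-n}(B_i))<k^{-1}\}\ge M_j(1-k^{-1})\quad\text{for all } j\ge n_{k,i}.\]
   Context: For $A\subseteq\mathbb{N}$, $\overline{\mathrm{dens}}(A)=\limsup_{N\to\infty}\frac{\operatorname{card}(A\cap[1,N])}{N}$. The notation $\lim_{n\in A}a_n=0$ means $a_n\to0$ as $n\to\infty$ with $n\in A$. *)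

(* Defs.v *)
From HB Require Import structures.
From mathcomp Require Import all_boot all_order all_algebra.
From mathcomp Require Import all_classical all_reals all_analysis.
Set Implicit Arguments. Unset Strict Implicit. Unset Printing Implicit Defensive.
Import Order.TTheory GRing.Theory Num.Theory.
Import numFieldNormedType.Exports.
Local Open Scope classical_set_scope.
Local Open Scope ring_scope.

Definition count_upto (A : set nat) (N : nat) : nat :=
  \sum_(1 <= n < N.+1) (n \in A : nat).

(* upper density: limsup_N card(A ∩ [1,N]) / N  (the N = 0 term is 0/0 = 0
   and does not affect the limsup) *)
Definition upper_dens (R : realType) (A : set nat) : R :=
  limn_sup (fun N => (count_upto A N)%:R / N%:R : R).

Definition lim0_along (R : realType) (A : set nat) (a : nat -> \bar R) : Prop :=
  forall e : R, 0 < e -> exists N : nat,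
    forall n, (N <= n)%N -> n \in A -> (`|a n| < e%:E)%E.

(* Main.v *)
Require Import Defs.
From HB Require Import structures.
From mathcomp Require Import all_boot all_order all_algebra.
From mathcomp Require Import all_classical all_reals all_analysis.
From mathcomp Require Import zify ring lra.
Import Order.TTheory GRing.Theory Num.Theory.
Import numFieldNormedType.Exports.
Local Open Scope classical_set_scope.
Local Open Scope ring_scope.

Definition cnt (P : nat -> bool) (N : nat) : nat := \sum_(1 <= n < N.+1) (P n : nat).

Lemma cnt_le (P : nat -> bool) N : (cnt P N <= N)%N.
Proof.
rewrite /cnt; apply: (@leq_trans (\sum_(1 <= n < N.+1) 1)%N).
  by apply: leq_sum => n _; apply: leq_b1.
by rewrite sum_nat_const_nat subn1 muln1.
Qed.

Lemma cnt_mono (P Q : nat -> bool) N : (forall n, (1 <= n <= N)%N -> P n -> Q n) -> (cnt P N <= cnt Q N)%N.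
Proof.
move=> H; rewrite /cnt big_nat_cond [X in (_ <= X)%N]big_nat_cond.
apply: leq_sum => n /andP[/andP[h1 h2] _].
case: (boolP (P n)) => Pn //=.
by rewrite (H n) // h1 -ltnS.
Qed.

Lemma cnt_or (P Q : nat -> bool) N : (cnt (fun n => P n || Q n) N <= cnt P N + cnt Q N)%N.
Proof.
rewrite /cnt -big_split /=; apply: leq_sum => n _.
by case: (P n); case: (Q n).
Qed.

Lemma cnt_compl (P : nat -> bool) N : (cnt P N + cnt (fun n => ~~ P n) N)%N = N.
Proof.
rewrite /cnt -big_split /=.
rewrite (eq_bigr (fun _ => 1%N)); last by move=> n _; case: (P n).
by rewrite sum_nat_const_nat subn1 muln1.
Qed.

Lemma cnt_small a N : (cnt (fun n => n <= a)%N N <= a)%N.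
Proof.
suff : (cnt (fun n => n <= a)%N N <= minn N a)%N by move=> h; apply: leq_trans h (geq_minr _ _).
elim: N => [|N IH]; first by rewrite /cnt big_geq.
rewrite /cnt big_nat_recr //= -/(cnt _ N).
case: (leqP N.+1 a) => h /=; lia.
Qed.
Section Dens.
Variable R : realType.

Lemma sdrop_in (u : nat -> R) n k : (n <= k)%N -> sdrop u n (u k).
Proof. by move=> h; exists k. Qed.

Lemma bnd01 (u : nat -> R) : (forall n, 0 <= u n <= 1) -> bounded_fun (u : R^o^nat).
Proof.
move=> H; exists 1; split => // M M1 x _ /=.
have /andP[h0 h1] := H x.
by rewrite ger0_norm // (le_trans h1) // ltW.
Qed.

Lemma sups_lb (u : nat -> R) : (forall n, 0 <= u n <= 1) ->
  forall n, u n <= sups (u : R^o^nat) n.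
Proof.
move=> H n; rewrite /sups /=; apply: ub_le_sup; last exact: sdrop_in.
by exists 1 => _ [k _ <-]; have /andP[] := H k.
Qed.

Lemma dens_hi (u : nat -> R) : (forall n, 0 <= u n <= 1) -> limn_sup (u : R^o^nat) = 1 ->
  forall e, 0 < e -> forall N0, exists N, (N0 <= N)%N /\ 1 - e < u N.
Proof.
move=> H; rewrite limn_supE; last exact: bnd01.
move=> Hinf e e0 N0.
have h1 : 1 <= sups (u : R^o^nat) N0.
  rewrite -Hinf; apply: ge_inf; last by exists N0.
  exists 0 => _ [n _ <-]; apply: (le_trans _ (@sups_lb u H n)).
  by case/andP: (H n).
have : 1 - e < sup (sdrop u N0).
  by apply: lt_le_trans h1; rewrite ltrBlDr ltrDl.
move/sup_gt => [].
  by exists (u N0); exact: sdrop_in.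
by move=> _ [k /= kN <-] hk; exists k.
Qed.

Lemma dens_lo (u : nat -> R) : (forall n, 0 <= u n <= 1) ->
  (forall e, 0 < e -> forall N0, exists N, (N0 <= N)%N /\ 1 - e <= u N) ->
  limn_sup (u : R^o^nat) = 1.
Proof.
move=> H Hd; rewrite limn_supE; last exact: bnd01.
have s1 : forall n, sups (u : R^o^nat) n = 1.
  move=> n; apply/eqP; rewrite eq_le; apply/andP; split.
    rewrite /sups /=; apply: ge_sup; first by exists (u n); exact: sdrop_in.
    by move=> _ [k _ <-]; have /andP[] := H k.
  apply/ler_addgt0Pr => e e0.
  have [N [nN hN]] := Hd e e0 n.
  rewrite -lerBlDr; apply: le_trans hN _.
  rewrite /sups /=; apply: ub_le_sup; last by exact: sdrop_in.
  by exists 1 => _ [k _ <-]; have /andP[] := H k.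
apply/eqP; rewrite eq_le; apply/andP; split.
  rewrite -(s1 0%N); apply: ge_inf; last by exists 0%N.
  by exists 1 => _ [n _ <-]; rewrite s1.
apply: lb_le_inf; first by exists 1; exists 0%N => //; rewrite s1.
by move=> _ [n _ <-]; rewrite s1.
Qed.
End Dens.
Lemma arith1 (R : realType) (m c g n0 kk jj : R) : 0 < m -> 1 <= kk -> 0 <= n0 -> 1 - jj^-1 < c / m -> c <= n0 + g ->
  2*kk <= jj -> 2*kk*n0 <= m -> m * (1 - kk^-1) <= g.
Proof.
move=> m0 k1 n00 h hc hj hn.
have jj0 : 0 < jj by lra.
have kk0 : 0 < kk by lra.
move: h; rewrite ltr_pdivlMr //= => h.
have ej : jj * jj^-1 = 1 by rewrite mulfV // gt_eqF.
have ek : kk * kk^-1 = 1 by rewrite mulfV // gt_eqF.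
have xj : 0 < jj^-1 by rewrite invr_gt0.
have xk : 0 < kk^-1 by rewrite invr_gt0.
have h1 : 2 * jj^-1 <= kk^-1.
  have : 2 * kk * jj^-1 <= jj * jj^-1 by rewrite ler_pM2r.
  rewrite ej => h2. nra.
have h2 : 2 * n0 <= m * kk^-1 by nra.
nra.
Qed.

Lemma Mge (M : nat -> nat) : (forall j, (M j < M j.+1)%N) -> forall j, (j + M 0 <= M j)%N.
Proof. move=> H; elim=> [|j IH] //; have := H j; lia. Qed.

Lemma dir1 (R : realType) (I : Type) (a : I -> nat -> \bar R) (a0 : forall i n, (0 <= a i n)%E) :
 (exists A : set nat, upper_dens R A = 1 /\ forall i, lim0_along A (a i)) ->
 exists M : nat -> nat, (forall j, (M j < M j.+1)%N) /\
   forall k : nat, (0 < k)%N -> forall i, exists nki : nat, forall j, (nki <= j)%N ->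
   (M j)%:R * (1 - k%:R^-1) <= ((\sum_(1 <= n < (M j).+1) ((a i n < (k%:R^-1)%:E)%E : nat))%:R : R).
Proof.
move=> [A [HA Hl]].
pose u := fun N => ((cnt (fun n => n \in A) N)%:R / N%:R : R).
have u01 : forall N, 0 <= u N <= 1.
  move=> N; rewrite /u; apply/andP; split; first by rewrite divr_ge0.
  case: N => [|N]; first by rewrite invr0 mulr0.
  by rewrite ler_pdivrMr ?ltr0n // mul1r ler_nat cnt_le.
have Hd := @dens_hi R u u01 HA.
have /choice[g Hg] : forall n : nat, exists N : nat, (n < N)%N /\ 1 - n.+1%:R^-1 < u N.
  move=> n; have [N [h1 h2]] := Hd (n.+1%:R^-1) (ltac:(by rewrite invr_gt0 ltr0n)) n.+1.
  by exists N.
pose M := fun j => iter j.+1 g 0%N.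
have Minc : forall j, (M j < M j.+1)%N by move=> j; rewrite /M iterS; case: (Hg (iter j.+1 g 0%N)).
have Mgt : forall j, (j < M j)%N.
  move=> j; have := @Mge M Minc j; have := (Hg 0%N).1; rewrite /M /= => h1 h2; lia.
have Hu : forall j, 1 - j.+1%:R^-1 < u (M j).
  case=> [|j]; first by have := (Hg 0%N).2.
  have := (Hg (M j)).2; rewrite /M iterS -/(M j) => h; apply: le_lt_trans h.
  rewrite lerD2l lerN2 lef_pV2 ?posrE ?ltr0n // ler_nat; exact: Mgt.
exists M; split => // k k0 i.
have [N0 HN0] := Hl i (k%:R^-1) (ltac:(by rewrite invr_gt0 ltr0n)).
exists (k.*2 * N0.+1)%N => j hj.
have hc : (cnt (fun n => n \in A) (M j) <= N0 + cnt (fun n => (a i n < (k%:R^-1)%:E)%E) (M j))%N.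
  apply: leq_trans (leq_add (cnt_small N0 (M j)) (leqnn _)).
  apply: leq_trans (cnt_or _ _ _); apply: cnt_mono => n _ nA.
  case: (leqP n N0) => //= hn.
  have := HN0 n (ltnW hn) nA; by rewrite gee0_abs.
apply: (@arith1 R _ (cnt (fun n => n \in A) (M j))%:R _ N0%:R k%:R j.+1%:R).
- by rewrite ltr0n; have := Mgt j; lia.
- by rewrite ler1n.
- by [].
- exact: Hu.
- by rewrite -natrD ler_nat.
- rewrite -natrM ler_nat; have : (1 <= N0.+1)%N by []; nia.
- rewrite -!natrM ler_nat; have := Mgt j; nia.
Qed.
Lemma arith2 (R : realType) (P1 Pm g cA e mm x : R) : 0 < P1 -> 0 < e -> 0 <= Pm -> x = mm + 2 ->
  2 * e^-1 < mm -> x * Pm < P1 -> P1 * (1 - x^-1) <= g -> g <= Pm + cA -> 1 - e <= cA / P1.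
Proof.
move=> p0 e0 pm0 hx hm hg hgood hcA.
rewrite ler_pdivlMr //.
have ei : 0 < e^-1 by rewrite invr_gt0.
have x0 : 0 < x by lra.
have ex : x * x^-1 = 1 by rewrite mulfV // gt_eqF.
have ee : e * e^-1 = 1 by rewrite mulfV // gt_eqF.
have xi : 0 < x^-1 by rewrite invr_gt0.
have h1 : Pm <= P1 * x^-1.
  have : x * Pm * x^-1 <= P1 * x^-1 by rewrite ler_pM2r // ltW.
  by rewrite mulrAC ex mul1r.
have h2 : 2 * x^-1 <= e.
  have h3 : 2 * e^-1 <= x by lra.
  have : 2 * e^-1 * (e * x^-1) <= x * (e * x^-1) by rewrite ler_pM2r // mulr_gt0.
  have -> : 2 * e^-1 * (e * x^-1) = 2 * x^-1 * (e * e^-1) by ring.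
  by rewrite ee mulr1 mulrCA ex mulr1.
nra.
Qed.

Fixpoint Jseq (T M : nat -> nat) (m : nat) : nat :=
  match m with 0 => 0%N | m'.+1 => maxn (T m) ((m'.+2 * M (Jseq T M m')).+1) end.

Lemma smono (P : nat -> nat) : (forall m, (P m < P m.+1)%N) -> forall a b, (a <= b)%N -> (P a + (b - a) <= P b)%N.
Proof.
move=> H a; elim=> [|b IH] hab.
  by move: hab; rewrite leqn0 => /eqP ->; rewrite addn0.
case: (leqP a b) => h.
  have := IH h; have := H b; lia.
have -> : a = b.+1 by lia.
by rewrite subnn addn0.
Qed.

Lemma dir2 (R : realType) (I : countType) (a : I -> nat -> \bar R) (a0 : forall i n, (0 <= a i n)%E) :
 (exists M : nat -> nat, (forall j, (M j < M j.+1)%N) /\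
   forall k : nat, (0 < k)%N -> forall i, exists nki : nat, forall j, (nki <= j)%N ->
   (M j)%:R * (1 - k%:R^-1) <= ((\sum_(1 <= n < (M j).+1) ((a i n < (k%:R^-1)%:E)%E : nat))%:R : R)) ->
 (exists A : set nat, upper_dens R A = 1 /\ forall i, lim0_along A (a i)).
Proof.
move=> [M [Minc HM]].
have /choice[f Hf] : forall ki : nat * I, exists n : nat, forall j, (n <= j)%N -> (0 < ki.1)%N ->
   (M j)%:R * (1 - ki.1%:R^-1) <= ((cnt (fun n => (a ki.2 n < (ki.1%:R^-1)%:E)%E) (M j))%:R : R).
  case=> k i; case: (posnP k) => [->|kp]; first by exists 0%N.
  by have [n Hn] := HM k kp i; exists n => j hj _; exact: Hn.
pose K m := (m.+1 * m.+1)%N.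
pose bad m p n : bool := if @pickle_inv I p is Some i then ~~ (a i n < ((K m)%:R^-1)%:E)%E else false.
pose good m n : bool := (\sum_(p < m.+1) bad m p n == 0)%N.
pose T m := (\max_(p < m.+1) (if @pickle_inv I p is Some i then f (K m, i) else 0%N))%N.
have HT : forall m j, (T m <= j)%N -> (M j)%:R * (1 - m.+1%:R^-1) <= ((cnt (good m) (M j))%:R : R).
  move=> m j hj.
  have hb : forall p : 'I_m.+1, ((cnt (bad m p) (M j))%:R : R) <= (M j)%:R / (K m)%:R.
    move=> p; rewrite /bad; case E: (pickle_inv p) => [i|]; last first.
      have -> : cnt (fun _ => false) (M j) = 0%N by rewrite /cnt big1.
      by rewrite divr_ge0.
    have hfi : (f (K m, i) <= j)%N.
      apply: leq_trans hj; rewrite /T.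
      by have := @leq_bigmax _ (fun p : 'I_m.+1 => if @pickle_inv I p is Some i then f (K m, i) else 0%N) p; rewrite E.
    have := Hf (K m, i) j hfi (ltac:(by rewrite /K muln_gt0)); rewrite /= => h.
    have := cnt_compl (fun n => (a i n < ((K m)%:R^-1)%:E)%E) (M j).
    move/(congr1 (fun x : nat => x%:R : R)); rewrite natrD => hc.
    move: h; rewrite mulrBr mulr1 => h.
    lra.
  have hng : (cnt (fun n => ~~ good m n) (M j) <= \sum_(p < m.+1) cnt (bad m p) (M j))%N.
    rewrite /cnt exchange_big /=; apply: leq_sum => n _.
    rewrite /good; case: (\sum_(p < m.+1) bad m p n)%N => //.
  have hng' : ((cnt (fun n => ~~ good m n) (M j))%:R : R) <= (M j)%:R / m.+1%:R.
    have := hng; rewrite -(ler_nat R) => hng2; apply: le_trans hng2 _.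
    rewrite natr_sum; apply: le_trans (ler_sum _ (fun p _ => hb p)) _.
    rewrite sumr_const card_ord -mulr_natl /K natrM.
    have hm : (m.+1%:R : R) != 0 by rewrite pnatr_eq0.
    rewrite le_eqVlt; apply/orP; left; apply/eqP; field; by rewrite addrC natr1.
  have := cnt_compl (good m) (M j).
  move/(congr1 (fun x : nat => x%:R : R)); rewrite natrD => hc.
  rewrite mulrBr mulr1; move: hng' hc; set b := (cnt _ _)%:R; set q := (_ / _); set g := (cnt _ _)%:R; lra.
pose P m := M (Jseq T M m).
have PT : forall m, (T m.+1 <= Jseq T M m.+1)%N by move=> m; rewrite /= leq_maxl.
have Pgrow : forall m, (m.+2 * P m < P m.+1)%N.
  move=> m; have := @Mge M Minc (Jseq T M m.+1); rewrite /P /=.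
  have := leq_maxr (T m.+1) (m.+2 * M (Jseq T M m)).+1; lia.
have Pinc : forall m, (P m < P m.+1)%N by move=> m; have := Pgrow m; nia.
have Pmono := @smono P Pinc.
have Pge : forall m, (m <= P m)%N by move=> m; have := Pmono 0%N m (leq0n m); lia.
have Plt : forall x y, (P x < P y)%N -> (x < y)%N.
  move=> x y h; case: (leqP y x) => // hyx; have := Pmono _ _ hyx; lia.
pose A := [set n | exists m, (P m < n <= P m.+1)%N /\ good m.+1 n].
exists A; split.
  pose u := fun N => ((cnt (fun n => n \in A) N)%:R / N%:R : R).
  have u01 : forall N, 0 <= u N <= 1.
    move=> N; rewrite /u; apply/andP; split; first by rewrite divr_ge0.
    case: N => [|N]; first by rewrite invr0 mulr0.
    by rewrite ler_pdivrMr ?ltr0n // mul1r ler_nat cnt_le.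
  apply: (@dens_lo R u u01) => e e0 N0.
  pose m := maxn N0 (Num.Def.archi_bound (2 * e^-1)).
  exists (P m.+1); split.
    have := Pge m.+1; have := leq_maxl N0 (Num.Def.archi_bound (2 * e^-1)); rewrite -/m; lia.
  have hg := HT m.+1 (Jseq T M m.+1) (PT m).
  have hgA : (cnt (good m.+1) (P m.+1) <= P m + cnt (fun n => n \in A) (P m.+1))%N.
    apply: leq_trans (leq_add (cnt_small (P m) (P m.+1)) (leqnn _)).
    apply: leq_trans (cnt_or _ _ _); apply: cnt_mono => n /andP[_ hn] gn.
    case: (leqP n (P m)) => //= hpn.
    by apply/mem_set; exists m; rewrite hpn hn.
  rewrite /u; apply: (@arith2 R _ (P m)%:R (cnt (good m.+1) (P m.+1))%:R _ e m%:R (m.+2)%:R).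
  - by rewrite ltr0n; have := Pge m.+1; lia.
  - exact: e0.
  - by [].
  - by rewrite -natr1 -natr1 -addrA.
  - apply: lt_le_trans (archi_boundP _) _; first by rewrite mulr_ge0 // invr_ge0 ltW.
    by rewrite ler_nat leq_maxr.
  - by rewrite -natrM ltr_nat.
  - exact: hg.
  - by rewrite -natrD ler_nat.
move=> i e e0.
pose m1 := maxn (pickle i) (Num.Def.archi_bound (e^-1)).
exists (P m1).+1 => n hn /set_mem [m [/andP[h1 h2] hgood]].
have hm : (m1 < m.+1)%N by apply: Plt; lia.
have hq : (pickle i < m.+2)%N by have := leq_maxl (pickle i) (Num.Def.archi_bound (e^-1)); rewrite -/m1; lia.
have hb : bad m.+1 (Ordinal hq) n = false.
  move: hgood; rewrite /good (bigD1 (Ordinal hq)) //=.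
  by case: (bad m.+1 (pickle i) n).
move: hb; rewrite /bad /= pickleK_inv => /negbFE hlt.
rewrite gee0_abs //; apply: lt_le_trans hlt _.
rewrite lee_fin.
have hA : e^-1 < (m.+2)%:R.
  apply: lt_le_trans (archi_boundP _) _; first by rewrite invr_ge0 ltW.
  rewrite ler_nat; have := leq_maxr (pickle i) (Num.Def.archi_bound (e^-1)); rewrite -/m1; lia.
rewrite -(invrK e) lef_pV2 ?posrE ?invr_gt0 ?ltr0n //.
apply: (le_trans (ltW hA)); rewrite ler_nat /K; nia.
Qed.

Theorem mainTheorem8 (R : realType) (d : measure_display) (X : measurableType d)
  (mu : {measure set X -> \bar R}) (phi : X -> X) (phi_meas : measurable_fun setT phi)
  (I : countType) (B : I -> set X)
  (B_meas : forall i, measurable (B i)) (B_pos : forall i, (0 < mu (B i))%E) :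
  (exists A : set nat, upper_dens R A = 1 /\
     forall i, lim0_along A (fun n => mu (iter n phi @^-1` B i)))
  <->
  (exists M : nat -> nat, (forall j, (M j < M j.+1)%N) /\
     forall (k : nat), (0 < k)%N -> forall i : I, exists nki : nat, forall j, (nki <= j)%N ->
       (M j)%:R * (1 - k%:R^-1) <=
       ((\sum_(1 <= n < (M j).+1)
           ((mu (iter n phi @^-1` B i) < (k%:R^-1)%:E)%E : nat))%:R : R)).
Proof.
have a0 : forall i n, (0 <= (fun i n => mu (iter n phi @^-1` B i)) i n)%E.
  by move=> i n; exact: measure_ge0.
split.
- exact: (@dir1 R I (fun i n => mu (iter n phi @^-1` B i)) a0).
- exact: (@dir2 R I (fun i n => mu (iter n phi @^-1` B i)) a0).
Qed.
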